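(* Let $H$ and $E$ be Hilbert spaces, let $T:H\to H$ be a bounded linear operator with $\ker T=\{0\}$, let $\gamma:E\to H$ be a bounded linear operator with $\ker\gamma=\{0\}$ and $\mathcal{R}(T)\cap\mathcal{R}(\gamma)=\{0\}$, and let $\Lambda$ be a linear operator in $E$ with domain $\mathcal{D}(\Lambda)\subset E$. Define on $\mathcal{D}(A)=\mathcal{R}(T)\dot+\mathcal{R}(\gamma)$ the maps $A(Tf+\gamma\varphi)=f$ and $\Gamma_0(Tf+\gamma\varphi)=\varphi$ ($f\in H,\varphi\in E$), and on $\mathcal{D}(\Gamma_1)=\mathcal{R}(T)\dot+\gamma\mathcal{D}(\Lambda)$ the map $\Gamma_1(Tf+\gamma\varphi)=\gamma^*f+\Lambda\varphi$ ($f\in H,\varphi\in\mathcal{D}(\Lambda)$). For $\lambda\in\mathbb{C}$ with $I-\lambda T$ boundedly invertible, let $M(\lambda)$ be the operator in $E$ defined by $M(\lambda)\Gamma_0u_\lambda=\Gamma_1u_\lambda$ for all $u_\lambda\in\ker(A-\lambda I)\cap\mathcal{D}(\Gamma_1)$. Then for every such $\lambda$, \[M(\lambda)=\Gamma_1(I-\lambda T)^{-1}\gamma=\Lambda+\lambda\gamma^*(I-\lambda T)^{-1}\gamma,\qquad \mathcal{D}(M(\lambda))=\mathcal{D}(\Lambda).\]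
   Context: $\mathcal{R}(\cdot)$ denotes range, $\dot+$ direct sum, $\gamma^*:H\to E$ the Hilbert-space adjoint of $\gamma$. $M(\lambda)$ is called the M-operator. *)

(* Defs.v *)
From HB Require Import structures.
From mathcomp Require Import all_boot all_order all_algebra.
From mathcomp Require Import complex.
From mathcomp Require Import all_classical all_reals all_analysis.
Set Implicit Arguments. Unset Strict Implicit. Unset Printing Implicit Defensive.
Import Order.TTheory GRing.Theory Num.Theory ComplexField.
Import numFieldNormedType.Exports.
Local Open Scope ring_scope.

(* Inner product on a complex normed space V whose norm is induced by it:
   linear in the first argument, conjugate symmetric, and <x,x> = |x|^2
   (which yields positivity and definiteness). *)
Record is_inner_product (R : realType) (V : normedModType R[i])
    (ip : V -> V -> R[i]) : Prop := {
  ip_linear : forall (a : R[i]) (x y z : V), ip (a *: x + y) z = a * ip x z + ip y z;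
  ip_conj_sym : forall x y : V, ip y x = (ip x y)^*;
  ip_norm : forall x : V, ip x x = `|x| ^+ 2
}.

Definition hilbert (R : realType) (V : completeNormedModType R[i])
  (ip : V -> V -> R[i]) : Prop := is_inner_product ip.

Definition bounded_op (R : realType) (U V : normedModType R[i]) (f : U -> V) : Prop :=
  exists k : R[i], forall x : U, `|f x| <= k * `|x|.

Definition is_adjoint (R : realType) (E H : normedModType R[i])
  (ipE : E -> E -> R[i]) (ipH : H -> H -> R[i]) (g : E -> H) (g' : H -> E) : Prop :=
  forall (e : E) (h : H), ipH (g e) h = ipE e (g' h).

Definition linear_op_in (R : realType) (E : normedModType R[i])
  (DL : E -> Prop) (Lam : E -> E) : Prop :=
  DL 0 /\
  (forall (a : R[i]) x y, DL x -> DL y -> DL (a *: x + y)) /\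
  (forall (a : R[i]) x y, DL x -> DL y -> Lam (a *: x + y) = a *: Lam x + Lam y).

Section Ops.
Variables (R : realType) (H E : normedModType R[i]).
Variables (T : H -> H) (g : E -> H) (g' : H -> E) (DL : E -> Prop) (Lam : E -> E).

Definition A_graph (u v : H) : Prop :=
  exists (f : H) (phi : E), u = T f + g phi /\ v = f.

Definition Gamma0_graph (u : H) (x : E) : Prop :=
  exists (f : H) (phi : E), u = T f + g phi /\ x = phi.

Definition Gamma1_graph (u : H) (y : E) : Prop :=
  exists (f : H) (phi : E), DL phi /\ u = T f + g phi /\ y = g' f + Lam phi.

Definition M_graph (lam : R[i]) (x y : E) : Prop :=
  exists u : H, A_graph u (lam *: u) /\ Gamma0_graph u x /\ Gamma1_graph u y.
End Ops.

(* Main.v *)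
Require Import Defs.
From HB Require Import structures.
From mathcomp Require Import all_boot all_order all_algebra.
From mathcomp Require Import complex.
From mathcomp Require Import all_classical all_reals all_analysis.
Import Order.TTheory GRing.Theory Num.Theory ComplexField.
Import numFieldNormedType.Exports.
Local Open Scope ring_scope.

Lemma zmod_eq (V : zmodType) (a b c d : V) : a + b = c + d -> a - c = d - b.
Proof.
move=> E; have -> : a = c + d - b by rewrite -E addrK.
by rewrite (addrC c) -!addrA; congr (_ + _); rewrite addrC -addrA addNr addr0.
Qed.

Lemma uniq_dec (R : realType) (H E : completeNormedModType R[i])
  (T : {linear H -> H}) (g : {linear E -> H}) :
  (forall f : H, T f = 0 -> f = 0) ->
  (forall phi : E, g phi = 0 -> phi = 0) ->
  (forall (f : H) (phi : E), T f = g phi -> g phi = 0) ->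
  forall f1 f2 p1 p2, T f1 + g p1 = T f2 + g p2 -> f1 = f2 /\ p1 = p2.
Proof.
move=> Tinj ginj Rint f1 f2 p1 p2 Eq.
have h1 : T (f1 - f2) = g (p2 - p1) by rewrite !linearB; exact: zmod_eq.
have h2 := Rint _ _ h1.
have ep : p2 - p1 = 0 by apply: ginj.
rewrite h2 in h1; have ef : f1 - f2 = 0 by apply: Tinj.
by split; apply/eqP; rewrite -subr_eq0 ?ef // -oppr_eq0 opprB ep.
Qed.

Lemma ip_second (R : realType) (V : completeNormedModType R[i]) (ip : V -> V -> R[i]) :
  hilbert ip -> forall (a : R[i]) x y z, ip x (a *: y + z) = a^* * ip x y + ip x z.
Proof.
case=> lin cs nrm a x y z.
rewrite (cs (a *: y + z) x) lin rmorphD rmorphM.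
by rewrite [ip x y]cs [ip x z]cs.
Qed.

Lemma adj_scale (R : realType) (H E : completeNormedModType R[i])
  (ipH : H -> H -> R[i]) (ipE : E -> E -> R[i]) (g : {linear E -> H}) (g' : H -> E) :
  hilbert ipH -> hilbert ipE -> is_adjoint ipE ipH g g' ->
  forall (a : R[i]) h, g' (a *: h) = a *: g' h.
Proof.
move=> hH hE adj a h.
have z0 : forall (V : completeNormedModType R[i]) (ip : V -> V -> R[i]),
    hilbert ip -> forall x, ip x 0 = 0.
  move=> V ip hi x; have := @ip_second _ _ _ hi 1 x 0 0.
  rewrite scaler0 addr0 rmorph1 mul1r => e.
  by apply: (addrI (ip x 0)); rewrite addr0 -e.
set d := g' (a *: h) - a *: g' h.
have : ipE d d = 0.
  rewrite {2}/d addrC -scaleNr ip_second // -!adj.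
  rewrite -[a *: h]addr0 ip_second // z0 // addr0 rmorphN mulNr.
  by rewrite addrC subrr.
have [_ _ nrm] := hE.
rewrite nrm => /eqP; rewrite expf_eq0 /= normr_eq0 => /eqP d0.
by apply/eqP; rewrite -subr_eq0 -/d d0.
Qed.

Theorem theorem2 (R : realType) (H E : completeNormedModType R[i])
  (ipH : H -> H -> R[i]) (ipE : E -> E -> R[i])
  (T : {linear H -> H}) (g : {linear E -> H}) (g' : H -> E)
  (DL : E -> Prop) (Lam : E -> E) :
  hilbert ipH -> hilbert ipE ->
  bounded_op T -> (forall f : H, T f = 0 -> f = 0) ->
  bounded_op g -> (forall phi : E, g phi = 0 -> phi = 0) ->
  (forall (f : H) (phi : E), T f = g phi -> g phi = 0) ->
  is_adjoint ipE ipH g g' ->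
  linear_op_in DL Lam ->
  forall (lam : R[i]) (S : {linear H -> H}),
    bounded_op S ->
    (forall h : H, S (h - lam *: T h) = h) ->
    (forall h : H, S h - lam *: T (S h) = h) ->
    (forall x y : E, M_graph T g g' DL Lam lam x y <-> Gamma1_graph T g g' DL Lam (S (g x)) y) /\
    (forall x y : E, M_graph T g g' DL Lam lam x y <->
        DL x /\ y = Lam x + lam *: g' (S (g x))).
Proof.
move=> hH hE _ Tinj _ ginj Rint adj _ lam S _ S1 S2.
have U := @uniq_dec _ _ _ T g Tinj ginj Rint.
have key : forall x, S (g x) = T (lam *: S (g x)) + g x.
  move=> x; rewrite linearZ addrC; apply/eqP; rewrite -subr_eq; exact/eqP.
have part1 : forall x y, M_graph T g g' DL Lam lam x y <->
    Gamma1_graph T g g' DL Lam (S (g x)) y.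
  move=> x y; split.
  - case=> u [[f [phi [eu ef]]] [[f0 [p0 [eu0 ex]]] G1]].
    have [_ ep] := U _ _ _ _ (etrans (esym eu) eu0).
    have e1 : u - lam *: T u = g x.
      by rewrite {1}eu -ef ep -ex linearZ addrAC subrr add0r.
    by rewrite -e1 S1.
  - move=> G1; exists (S (g x)); split; last split => //.
      by exists (lam *: S (g x)), x; split => //; exact: key.
    by exists (lam *: S (g x)), x; split => //; exact: key.
split => // x y; rewrite part1; split.
- case=> f [phi [Dp [eu ey]]].
  rewrite key in eu; have [ef ep] := U _ _ _ _ eu.
  rewrite ep; split => //; rewrite ey -ef (@adj_scale _ _ _ _ _ _ _ hH hE adj) addrC.
  by rewrite ep.
- case=> Dx ey; exists (lam *: S (g x)), x; split => //; split; first exact: key.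
  by rewrite ey (@adj_scale _ _ _ _ _ _ _ hH hE adj) addrC.
Qed.
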